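(* Work in the semifield $\mathbb{R}_{\max,+}$. Let $\bm{r}_1,\ldots,\bm{r}_m\in\mathbb{R}^{n}$ and $w_1,\ldots,w_m\in\mathbb{R}$, and define $\bm{p}=w_1\bm{r}_1\oplus\cdots\oplus w_m\bm{r}_m$ and the row vector $\bm{q}^{-}=w_1\bm{r}_1^{-}\oplus\cdots\oplus w_m\bm{r}_m^{-}$. Then the minimum of $\bm{x}^{-}\bm{p}\oplus\bm{q}^{-}\bm{x}$ over $\bm{x}\in\mathbb{R}^{n}$ equals $$\Delta=(\bm{q}^{-}\bm{p})^{1/2},$$ and it is attained at every vector $\bm{x}$ satisfying $\Delta^{-1}\bm{p}\le\bm{x}\le\Delta\bm{q}$.
   Context: $\mathbb{R}_{\max,+}=(\mathbb{R}\cup\{-\infty\},-\infty,0,\max,+)$: addition $x\oplus y=\max(x,y)$, multiplication $x\otimes y=x+y$ (the sign $\otimes$ is omitted), zero $-\infty$, identity $0$, inverse $x^{-1}=-x$, and power $x^{y}=xy$ in ordinary arithmetic (so $\Delta=(\bm{q}^{-}\bm{p})^{1/2}$ means half of the ordinary number $\bm{q}^{-}\bm{p}$). Vectors in $\mathbb{R}^n$ are columns; vector operations are entrywise with these operations, e.g. $(w\bm{r})_j=w+r_j$, and a row vector times a column vector is $\bm{u}\bm{v}=\max_j(u_j+v_j)$. For a column vector $\bm{x}=(x_j)\in\mathbb{R}^n$, $\bm{x}^{-}$ is the row vector $(-x_1,\ldots,-x_n)$; for a row vector the pseudo-inverse is the column vector obtained the same way, so $\bm{q}$ denotes the column vector whose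 entries are the negatives of those of $\bm{q}^{-}$. Inequalities between vectors are componentwise. *)

(* Defs.v *)
(* Max-plus algebra R_{max,+} with real (finite) entries,
   modelled in an arbitrary real field R (ordinary arithmetic). *)
From mathcomp Require Import all_boot all_order all_algebra.
Set Implicit Arguments. Unset Strict Implicit. Unset Printing Implicit Defensive.
Import Order.TTheory GRing.Theory Num.Theory.
Local Open Scope ring_scope.

Definition mpsum (R : realFieldType) (k : nat) (F : 'I_k.+1 -> R) : R :=
  \big[Num.max/F ord0]_(i < k.+1) F i.

Section MaxPlus.
Variables (R : realFieldType) (m n : nat).
Variables (r : 'I_m.+1 -> 'I_n.+1 -> R) (w : 'I_m.+1 -> R).

Definition mp_p : 'I_n.+1 -> R := fun j => mpsum (fun i => w i + r i j).

Definition mp_qminus : 'I_n.+1 -> R := fun j => mpsum (fun i => w i - r i j).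

Definition mp_q : 'I_n.+1 -> R := fun j => - mp_qminus j.

Definition mp_obj (x : 'I_n.+1 -> R) : R :=
  Num.max (mpsum (fun j => - x j + mp_p j)) (mpsum (fun j => mp_qminus j + x j)).

Definition mp_Delta : R := mpsum (fun j => mp_qminus j + mp_p j) / 2.
End MaxPlus.

(* Main.v *)
Require Import Defs.
From mathcomp Require Import all_boot all_order all_algebra.
From mathcomp Require Import lra.
Import Order.TTheory GRing.Theory Num.Theory.
Local Open Scope ring_scope.
Set Implicit Arguments.

Lemma mpsum_ge {R : realFieldType} {k : nat} (F : 'I_k.+1 -> R) i :
  F i <= mpsum F.
Proof.
rewrite /mpsum.
have : i \in index_enum 'I_k.+1 by rewrite mem_index_enum.
elim: (index_enum _) => [//|a s IH]; rewrite inE big_cons.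
case/orP=> [/eqP->|/IH H]; first by rewrite le_max lexx.
by rewrite le_max H orbT.
Qed.

Lemma mpsum_le {R : realFieldType} {k : nat} (F : 'I_k.+1 -> R) c :
  (forall i, F i <= c) -> mpsum F <= c.
Proof.
move=> H; rewrite /mpsum; apply: (big_ind (fun v => v <= c)) => //.
by move=> a b Ha Hb; rewrite ge_max Ha Hb.
Qed.

Theorem theorem5 (R : realFieldType) (m n : nat)
    (r : 'I_m.+1 -> 'I_n.+1 -> R) (w : 'I_m.+1 -> R) :
  (forall x : 'I_n.+1 -> R, mp_Delta r w <= mp_obj r w x) /\
  (exists x : 'I_n.+1 -> R, mp_obj r w x = mp_Delta r w) /\
  (forall x : 'I_n.+1 -> R,
     (forall j, - mp_Delta r w + mp_p r w j <= x j /\ x j <= mp_Delta r w + mp_q r w j) ->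
     mp_obj r w x = mp_Delta r w).
Proof.
have Sge : forall j, mp_qminus r w j + mp_p r w j <= 2 * mp_Delta r w.
  move=> j; rewrite /mp_Delta [2 * _]mulrC divfK ?pnatr_eq0 //.
  have := mpsum_ge (fun j => mp_qminus r w j + mp_p r w j) j. move=> HH. exact HH.
have upper : forall x : 'I_n.+1 -> R,
     (forall j, - mp_Delta r w + mp_p r w j <= x j /\ x j <= mp_Delta r w + mp_q r w j) ->
     mp_obj r w x <= mp_Delta r w.
  move=> x H; rewrite /mp_obj ge_max; apply/andP; split; apply: mpsum_le => j;
  have [H1 H2] := H j; move: H2; rewrite /mp_q => H2; lra.
have lower : forall x : 'I_n.+1 -> R, mp_Delta r w <= mp_obj r w x.
  move=> x; rewrite /mp_Delta ler_pdivrMr ?ltr0n //.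
  apply: mpsum_le => j; rewrite /mp_obj.
  have h1 := mpsum_ge (fun j => - x j + mp_p r w j) j.
  have h2 := mpsum_ge (fun j => mp_qminus r w j + x j) j.
  move: h1 h2; set a := mpsum _; set b := mpsum _ => h1 h2.
  have h3 : a <= Num.max a b by rewrite le_max lexx.
  have h4 : b <= Num.max a b by rewrite le_max lexx orbT.
  lra.
split; first exact: lower.
split; last by move=> x H; apply/eqP; rewrite eq_le upper // lower.
exists (fun j => - mp_Delta r w + mp_p r w j); apply/eqP; rewrite eq_le lower andbT.
apply: upper => j; split; first by [].
have := Sge j; rewrite /mp_q; lra.
Qed.
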